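(* Let $D=(V,A)$ be a digraph with minimum in-degree at least 1, and let $\mathcal{L}D=\mathcal{L}_{(A',\phi)}D$ be a partial line digraph of $D$. Then the number of semikernels of $D$ is less than or equal to the number of semikernels of $\mathcal{L}D$; more precisely, the map $K\mapsto\omega^-(K)\cap A'$ sends semikernels of $D$ injectively to semikernels of $\mathcal{L}D$.
   Context: Digraphs are loopless and without multiple arcs. For $U\subseteq V$, $\omega^-(U)=\{(x,y)\in A: y\in U,\ x\notin U\}$ and $\omega^+(U)=\{(x,y)\in A: x\in U,\ y\notin U\}$; for a vertex $j$, $\omega^-(j)$ is the set of arcs with terminal vertex $j$. For a set of arcs $\Omega$, $H(\Omega)=\{y:(x,y)\in\Omega\}$. The arc $(x,y)$ is also written $xy$. Partial line digraph: given $D=(V,A)$ with minimum in-degree at least 1, take an arc subset $A'\subseteq A$ and a surjective map $\phi:A\to A'$ such that (i) $H(A')=V$; (ii) $\phi$ restricted to $A'$ is the identity, and for every vertex $j\in V$, $\phi(\omega^-(j))\subseteq\omega^-(j)\cap A'$. The partial line digraph $\mathcal{L}_{(A',\phi)}D$ has vertex set $A'$ and arc set $\{(ij,\phi(j,k)) : ij\in A',\ (j,k)\in A\}$. A semikernel of a digraph is an independent vertex set $S$ (no arc joins two vertices of $S$) such that for every arc $(s,x)\in\omega^+(S)$ there is an arc $(x,s')\in\omega^-(S)$. *)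

(* Defs.v *)
From mathcomp Require Import all_boot.
Set Implicit Arguments. Unset Strict Implicit. Unset Printing Implicit Defensive.

(* A digraph on a finite vertex type T is given by its arc relation E : rel T;
   arcs are pairs (x,y) with E x y. A digraph may be restricted to a vertex set W. *)

Definition independent (T : finType) (E : rel T) (S : {set T}) : bool :=
  [forall x in S, forall y in S, ~~ E x y].

Definition semikernel (T : finType) (W : {set T}) (E : rel T) (S : {set T}) : bool :=
  [&& S \subset W, independent E S &
      [forall s in S, forall x in W :\: S, E s x ==> [exists s' in S, E x s']]].

Definition arcs (V : finType) (E : rel V) : {set V * V} := [set a | E a.1 a.2].

(* (A', phi) defines a partial line digraph of D = (V, E). phi is given as a
   function on V*V; only its values on arcs matter. *)
Definition is_pld (V : finType) (E : rel V) (A' : {set V * V})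
    (phi : V * V -> V * V) : Prop :=
  (A' \subset arcs E) /\
      (* H(A') = V *)
      (forall y : V, exists a, (a \in A') /\ a.2 = y) /\
      (forall a, a \in A' -> exists b, (b \in arcs E) /\ phi b = a) /\
      (forall a, a \in arcs E -> phi a \in A') /\
      (forall a, a \in A' -> phi a = a) /\
      (* phi(omega^-(j)) subset omega^-(j) cap A' *)
      (forall a, a \in arcs E -> (phi a).2 = a.2).

(* Arc relation of the partial line digraph L_(A',phi) D, whose vertex set is A':
   (ij, phi(j,k)) for ij in A' and (j,k) in A. *)
Definition pld_rel (V : finType) (E : rel V) (A' : {set V * V})
    (phi : V * V -> V * V) : rel (V * V) :=
  fun a b => (a \in A') && [exists k : V, E a.2 k && (phi (a.2, k) == b)].

Definition in_arcs_A' (V : finType) (E : rel V) (A' : {set V * V}) (K : {set V})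
  : {set V * V} :=
  [set a in A' | E a.1 a.2 && (a.2 \in K) && (a.1 \notin K)].

(* Main.v *)
Require Import Defs.
From mathcomp Require Import all_boot.

Lemma semi_indep (T : finType) (E : rel T) (K : {set T}) x y :
  semikernel setT E K -> x \in K -> y \in K -> E x y = false.
Proof.
case/and3P=> _ /forallP Hi _ xK yK.
by move: (Hi x); rewrite xK /= => /forallP /(_ y); rewrite yK /= => /negbTE.
Qed.

Lemma semi_abs (T : finType) (E : rel T) (K : {set T}) s x :
  semikernel setT E K -> s \in K -> x \notin K -> E s x -> exists2 s', s' \in K & E x s'.
Proof.
case/and3P=> _ _ /forallP Ha sK xK Esx.
move: (Ha s); rewrite sK /= => /forallP /(_ x).
rewrite inE xK inE /= Esx /= => /existsP [s' /andP [H1 H2]]; by exists s'.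
Qed.

Theorem theorem2p6 (V : finType) (E : rel V) (A' : {set V * V})
    (phi : V * V -> V * V)
    (Hloopless : irreflexive E)
    (Hindeg : forall y : V, exists x : V, E x y)
    (Hpld : is_pld E A' phi) :
  (forall K : {set V}, semikernel setT E K ->
      semikernel A' (pld_rel E A' phi) (in_arcs_A' E A' K)) /\
  {in [pred K : {set V} | semikernel setT E K] &, injective (in_arcs_A' E A')} /\
  #|[set K : {set V} | semikernel setT E K]|
    <= #|[set S : {set V * V} | semikernel A' (pld_rel E A' phi) S]|.
Proof.
case: Hpld => HA' [Hhead [_ [Hphi [_ Hphi2]]]].
have arcA : forall a, a \in A' -> E a.1 a.2.
  by move=> a /(subsetP HA'); rewrite inE.
have part1 : forall K : {set V}, semikernel setT E K ->
      semikernel A' (pld_rel E A' phi) (in_arcs_A' E A' K).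
  move=> K HK; apply/and3P; split.
  - by apply/subsetP => a; rewrite inE => /andP [].
  - apply/forallP => a; apply/implyP; rewrite inE => /and3P [aA /andP [_ a2K] _].
    apply/forallP => b; apply/implyP; rewrite inE => /and3P [bA /andP [_ b2K] _].
    apply/negP => /andP [_ /existsP [k /andP [Ek /eqP Hb]]].
    have : b.2 = k by rewrite -Hb Hphi2 // inE.
    by move=> e; subst k; rewrite (@semi_indep _ _ _ _ _ HK a2K b2K) in Ek.
  - apply/forallP => s; apply/implyP; rewrite inE => /and3P [sA /andP [_ s2K] _].
    apply/forallP => x; apply/implyP => /setDP [xA _]; apply/implyP.
    case/andP => _ /existsP [k /andP [Ek /eqP Hx]].
    have x2 : x.2 = k by rewrite -Hx Hphi2 // inE.
    have kK : k \notin K.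
      by apply/negP => kK; rewrite (@semi_indep _ _ _ _ _ HK s2K kK) in Ek.
    have [s'' s''K Eks''] := @semi_abs _ _ _ _ _ HK s2K kK Ek.
    apply/existsP; exists (phi (k, s'')).
    have pA : phi (k, s'') \in A' by apply: Hphi; rewrite inE.
    have p2 : (phi (k, s'')).2 = s'' by rewrite Hphi2 // inE.
    apply/andP; split.
      rewrite inE pA /= arcA //= p2 s''K /=.
      apply/negP => p1K; move: (arcA _ pA); rewrite p2 (@semi_indep _ _ _ _ _ HK p1K s''K).
      by [].
    rewrite /pld_rel xA /=; apply/existsP; exists s''; by rewrite x2 Eks'' eqxx.
have inj : {in [pred K : {set V} | semikernel setT E K] &, injective (in_arcs_A' E A')}.
  have sub : forall K1 K2, semikernel setT E K1 ->
      in_arcs_A' E A' K1 = in_arcs_A' E A' K2 -> K1 \subset K2.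
    move=> K1 K2 H1 Heq; apply/subsetP => y yK.
    have [a [aA a2]] := Hhead y.
    have a1 : a.1 \notin K1.
      apply/negP => a1K; move: (arcA _ aA); rewrite a2 (@semi_indep _ _ _ _ _ H1 a1K yK).
      by [].
    have : a \in in_arcs_A' E A' K1 by rewrite inE aA arcA //= a2 yK a1.
    by rewrite Heq inE a2 => /and3P [_ /andP [_ ->] _].
  move=> K1 K2; rewrite !inE => H1 H2 Heq; apply/eqP; rewrite eqEsubset.
  by rewrite (sub _ _ H1 Heq) (sub _ _ H2 (esym Heq)).
split => //; split => //.
rewrite -(card_in_imset (f := in_arcs_A' E A')); last first.
  by move=> K1 K2; rewrite !inE => H1 H2; apply: inj.
apply: subset_leq_card; apply/subsetP => S /imsetP [K]; rewrite !inE => HK ->.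
exact: part1.
Qed.
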